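(* Let $T=(V,E)$ be a temporal bipartite graph with $m=|E|$ edges, let $\tau>0$, $c>0$, let $s$ be a positive integer and let $i\in\{1,\dots,6\}$. Let $\widehat{C}_i$ be the estimator produced by \texttt{TBC-I} with parameters $s$ and $c$, as described in the context. Then $\mathbb{E}[\widehat{C}_i]=C_i$ and $\operatorname{Var}[\widehat{C}_i]\le\frac{m-1}{s}\,C_i^2$.
   Context: A temporal bipartite graph $T=(V,E)$ has node set $V=U\cup L$ with $U\cap L=\emptyset$ and a finite (multi)set $E\subseteq U\times L\times\mathbb{R}^+$ of temporal edges $(u,l,t)$ (several edges may join the same pair $u,l$ at different times); $m=|E|$. A temporal butterfly $B_i$ ($i=1,\dots,6$) is the butterfly on nodes $u'_1,u'_2$ (upper side) and $l'_1,l'_2$ (lower side) with edges $(u'_1,l'_1),(u'_2,l'_1),(u'_1,l'_2),(u'_2,l'_2)$ together with an ordering $\sigma_i$ of these four edges; $\sigma_1,\dots,\sigma_6$ are the six orderings in which $(u'_1,l'_1)$ comes first. Given $\tau>0$, a set $S$ of four temporal edges $\{(u_x,l_x,t_1),(u_y,l_x,t_2),(u_x,l_y,t_3),(u_y,l_y,t_4)\}$ of $T$ with $u_x\ne u_y\in U$, $l_x\ne l_y\in L$ is a $\tau$-instance of $B_i$ if, under the map $u_x\mapsto u'_1,u_y\mapsto u'_2,l_x\mapsto l'_1,l_y\mapsto l'_2$, the order of the four edges by timestamp matches $\sigma_i$ (so $(u_x,l_x,t_1)$ has the smallest timestamp), and $\max_{j\in\{2,3,4\}}t_j-t_1\le\tau$.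 $C_i$ denotes the number of $\tau$-instances of $B_i$ in $T$, and for $e\in E$, $C_i(e)$ denotes the number of $\tau$-instances of $B_i$ whose first (smallest-timestamp) edge is $e$. Algorithm \texttt{TBC-I}: draw $s$ edges $e'_1,\dots,e'_s$ from $E$, each uniformly at random and independently. For each drawn edge $e'=(u,l,t')$, add to the multiset $\widehat{E}$ every edge of $E$ whose timestamp lies in $[t',t'+c\tau]$ (an edge may be added several times). For $e=(u,l,t)\in E$ let $m'_e$ be the number of edges of $E$ with timestamp in $[t-c\tau,t]$. The output is $\widehat{C}_i=\sum_{e\in\widehat{E}}\frac{m}{s\,m'_e}C_i(e)$, the sum counting multiplicities in $\widehat{E}$. *)

(* Defs.v *)
From mathcomp Require Import all_boot all_order all_algebra all_fingroup.
Set Implicit Arguments. Unset Strict Implicit. Unset Printing Implicit Defensive.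
Import Order.TTheory GRing.Theory Num.Theory.
Local Open Scope ring_scope.

(* A temporal bipartite graph with m temporal edges is given by edge indices
   'I_m (so multisets of edges are allowed) together with
   eu : 'I_m -> U (upper endpoint), el : 'I_m -> L (lower endpoint),
   et : 'I_m -> R (timestamp).  U and L are distinct types, hence disjoint. *)

Section TBC.
Variables (R : realFieldType) (U L : eqType) (m : nat).
Variables (eu : 'I_m -> U) (el : 'I_m -> L) (et : 'I_m -> R).

(* timestamps of the edges (u2,l1), (u1,l2), (u2,l2), labelled 0,1,2 *)
Definition later_time (e2 e3 e4 : 'I_m) (j : 'I_3) : R :=
  match val j with 0%N => et e2 | 1%N => et e3 | _ => et e4 end.

(* (e1,e2,e3,e4) = ((ux,lx,t1),(uy,lx,t2),(ux,ly,t3),(uy,ly,t4)) is a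
   tau-instance of the butterfly whose edge ordering sigma is
   (u1,l1) first, followed by the edges labelled p 0, p 1, p 2. *)
Definition is_instance (p : {perm 'I_3}) (tau : R) (e1 e2 e3 e4 : 'I_m) : bool :=
  [&& eu e1 == eu e3, eu e2 == eu e4, el e1 == el e2, el e3 == el e4,
      eu e1 != eu e2, el e1 != el e3,
      [forall j : 'I_3, et e1 < later_time e2 e3 e4 j],
      [forall j : 'I_3, forall k : 'I_3,
          (j < k)%N ==> (later_time e2 e3 e4 (p j) < later_time e2 e3 e4 (p k))] &
      [forall j : 'I_3, later_time e2 e3 e4 j - et e1 <= tau]].

Definition Ccount (p : {perm 'I_3}) (tau : R) : nat :=
  #|[set x : 'I_m * 'I_m * 'I_m * 'I_m |
      is_instance p tau x.1.1.1 x.1.1.2 x.1.2 x.2]|.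

Definition Ccount_e (p : {perm 'I_3}) (tau : R) (e : 'I_m) : nat :=
  #|[set x : 'I_m * 'I_m * 'I_m | is_instance p tau e x.1.1 x.1.2 x.2]|.

Definition mprime (c tau : R) (e : 'I_m) : nat :=
  #|[set f : 'I_m | (et e - c * tau <= et f) && (et f <= et e)]|.

Definition TBC_I (p : {perm 'I_3}) (tau c : R) (s : nat)
    (w : {ffun 'I_s -> 'I_m}) : R :=
  \sum_(k < s) \sum_(e : 'I_m | (et (w k) <= et e) && (et e <= et (w k) + c * tau))
      (m%:R / (s%:R * (mprime c tau e)%:R)) * (Ccount_e p tau e)%:R.

End TBC.

Definition uexpect (R : realFieldType) (Omega : finType) (X : Omega -> R) : R :=
  (\sum_(w : Omega) X w) / #|Omega|%:R.

Definition uvar (R : realFieldType) (Omega : finType) (X : Omega -> R) : R :=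
  uexpect (fun w => (X w - uexpect X) ^+ 2).

(* Main.v *)
Require Import Defs.
From mathcomp Require Import all_boot all_order all_algebra all_fingroup.
From mathcomp Require Import ring lra.
Import Order.TTheory GRing.Theory Num.Theory.
Local Open Scope ring_scope.

Section Gen.
Variables (R : realFieldType) (J : finType).

Lemma sum_marg (I : finType) (k : I) (G : J -> R) :
  \sum_(w : {ffun I -> J}) G (w k) = #|J|%:R ^+ #|I|.-1 * \sum_j G j.
Proof.
transitivity (\sum_(w : {ffun I -> J}) \prod_i (if i == k then G (w i) else 1)).
  apply: eq_bigr => w _; rewrite (bigD1 k) //= eqxx big1 ?mulr1 // => i /negbTE -> //.
rewrite -(bigA_distr_bigA (fun i j => if i == k then G j else 1)) /=.
rewrite (bigD1 k) //= eqxx mulrC; congr (_ * _).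
rewrite (eq_bigr (fun _ => #|J|%:R)); last first.
  by move=> i /negbTE ->; rewrite sumr_const.
by rewrite prodr_const cardC1.
Qed.

Lemma sum_pair (I : finType) (k k' : I) (G H : J -> R) : k != k' -> \sum_j G j = 0 ->
  \sum_(w : {ffun I -> J}) G (w k) * H (w k') = 0.
Proof.
move=> kk' hG.
transitivity (\sum_(w : {ffun I -> J}) \prod_i
   (if i == k then G (w i) else if i == k' then H (w i) else 1)).
  apply: eq_bigr => w _; rewrite (bigD1 k) //= eqxx (bigD1 k') /=; last by rewrite eq_sym.
  rewrite eq_sym (negbTE kk') eqxx big1 ?mulr1 // => i /andP [/negbTE -> /negbTE ->] //.
rewrite -(bigA_distr_bigA (fun i j => if i == k then G j else if i == k' then H j else 1)) /=.
by rewrite (bigD1 k) //= eqxx hG mul0r.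
Qed.

Lemma var_iid (n : nat) (Y : J -> R) (Hn : (0 < n)%N) (HJ : (0 < #|J|)%N) :
  uexpect (fun w : {ffun 'I_n -> J} => \sum_k Y (w k)) =
     n%:R * (\sum_j Y j) / #|J|%:R /\
  uvar (fun w : {ffun 'I_n -> J} => \sum_k Y (w k)) =
     n%:R / #|J|%:R * \sum_j (Y j - (\sum_i Y i) / #|J|%:R) ^+ 2.
Proof.
set N := #|J|%:R.
have N0 : N != 0 by rewrite pnatr_eq0 -lt0n.
have cardO : #|{ffun 'I_n -> J}|%:R = N ^+ n.-1 * N.
  by rewrite card_ffun card_ord natrX -exprSr prednK.
have E : uexpect (fun w : {ffun 'I_n -> J} => \sum_k Y (w k)) =
     n%:R * (\sum_j Y j) / N.
  rewrite /uexpect exchange_big /=.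
  rewrite (eq_bigr (fun _ => N ^+ n.-1 * \sum_j Y j)); last first.
    by move=> k _; rewrite (sum_marg _ k Y) card_ord.
  rewrite sumr_const (_ : #|_| = n); last exact: card_ord.
  rewrite cardO.
  have : N ^+ n.-1 != 0 by rewrite expf_neq0.
  move=> h; field; by rewrite h N0.
split => //.
rewrite /uvar E.
set S := \sum_j Y j.
set Z := fun j => Y j - S / N.
have sZ : \sum_j Z j = 0.
  rewrite /Z sumrB sumr_const -/S -mulr_natr.
  have -> : S / N * (#|(xpredT : pred J)|)%:R = S by apply: mulfVK.
  by rewrite subrr.
have XZ : forall w : {ffun 'I_n -> J}, \sum_k Y (w k) - n%:R * S / N = \sum_k Z (w k).
  move=> w; rewrite /Z sumrB sumr_const card_ord -mulr_natl; congr (_ - _).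
  by rewrite -[RHS]mulr_natl mulr1 mulrA.
rewrite /uexpect.
under eq_bigr do rewrite XZ expr2 big_distrlr /=.
rewrite exchange_big /=.
under eq_bigr do rewrite exchange_big /=.
rewrite (eq_bigr (fun _ => N ^+ n.-1 * \sum_j Z j ^+ 2)); last first.
  move=> k _; rewrite (bigD1 k) //= [X in _ + X]big1 ?addr0; last first.
    by move=> k' kk'; rewrite sum_pair // eq_sym.
  transitivity (\sum_(w : {ffun 'I_n -> J}) (fun j => Z j ^+ 2) (w k)).
    by apply: eq_bigr => w _; rewrite expr2.
  by rewrite (sum_marg _ k (fun j => Z j ^+ 2)) card_ord.
rewrite sumr_const card_ord cardO -mulr_natl.
have : N ^+ n.-1 != 0 by rewrite expf_neq0.
move=> h; field; by rewrite h N0.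
Qed.

Lemma var_bound (Y : J -> R) (M : R) : (0 < #|J|)%N ->
  (forall j, 0 <= Y j <= M) ->
  \sum_j (Y j - (\sum_i Y i) / #|J|%:R) ^+ 2 <=
    M * (\sum_i Y i) - (\sum_i Y i) ^+ 2 / #|J|%:R.
Proof.
move=> HJ hY.
set N := #|J|%:R; set S := \sum_i Y i.
have N0 : N != 0 by rewrite pnatr_eq0 -lt0n.
have sq : \sum_j Y j ^+ 2 <= M * S.
  rewrite /S mulr_sumr; apply: ler_sum => j _.
  have /andP [h0 h1] := hY j.
  by rewrite expr2 ler_wpM2r.
rewrite (eq_bigr (fun j => Y j ^+ 2 - (2 * (S/N)) * Y j + (S/N)^+2)); last by move=> j _; ring.
rewrite big_split /= sumrB -mulr_sumr sumr_const -/S -[_ *+ #|_|]mulr_natr.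
have -> : (#|(xpredT : pred J)|)%:R = N by [].
have E : 1 * 2 * (S / N) * S - (S / N) ^+ 2 * N = S ^+ 2 / N by field.
lra.
Qed.
End Gen.

Lemma cardsum (T : finType) (P : pred T) : #|[set x | P x]| = (\sum_x (P x : nat))%N.
Proof.
rewrite -sum1_card big_mkcond; apply: eq_bigr => x _; rewrite inE; by case: (P x).
Qed.

Lemma sum_pairE (A B : finType) (f : A * B -> nat) :
  (\sum_x f x = \sum_a \sum_b f (a, b))%N.
Proof. by rewrite pair_bigA /=; apply: eq_bigr => [[a b]]. Qed.

(* The s draws are i.i.d. uniform on E, i.e. w is uniform on {ffun 'I_s -> 'I_m}. *)
Theorem theorem4p2 (R : realFieldType) (U L : eqType) (m : nat)
    (eu : 'I_m -> U) (el : 'I_m -> L) (et : 'I_m -> R)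
    (Het : forall e, 0 < et e)
    (tau c : R) (Htau : 0 < tau) (Hc : 0 < c)
    (s : nat) (Hs : (0 < s)%N) (p : {perm 'I_3}) :
  uexpect (TBC_I eu el et p tau c (s := s)) = (Ccount eu el et p tau)%:R /\
  uvar (TBC_I eu el et p tau c (s := s))
    <= (m%:R - 1) / s%:R * (Ccount eu el et p tau)%:R ^+ 2.
Proof.
have hsC : (\sum_e Ccount_e eu el et p tau e = Ccount eu el et p tau)%N.
  rewrite /Ccount /Ccount_e cardsum; under eq_bigr do rewrite cardsum.
  rewrite !sum_pairE; under eq_bigr do rewrite !sum_pairE.
  done.
have [m0|mpos] := posnP m.
  subst m.
  have k0 : 'I_s := Ordinal Hs.
  have Hsum : forall F : {ffun 'I_s -> 'I_0} -> R, \sum_w F w = 0.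
    by move=> F; apply: big1 => w; case: (w k0).
  have C0 : Ccount eu el et p tau = 0%N by rewrite -hsC big_ord0.
  rewrite /uvar /uexpect !Hsum mul0r C0 expr0n /= mulr0; split => //.
pose Y := fun f : 'I_m => ( \sum_(e | (et f <= et e) && (et e <= et f + c * tau))
   (m%:R / (s%:R * (mprime et c tau e)%:R)) * (Ccount_e eu el et p tau e)%:R : R).
have -> : TBC_I eu el et p tau c (s:=s) = fun w => \sum_k Y (w k) by [].
have HJ : (0 < #|'I_m|)%N by rewrite card_ord.
have [E V] := @var_iid R _ s Y Hs HJ.
rewrite E V card_ord.
set C := (Ccount eu el et p tau)%:R.
have m0 : m%:R != 0 :> R by rewrite pnatr_eq0 -lt0n.
have s0 : s%:R != 0 :> R by rewrite pnatr_eq0 -lt0n.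
have mp_pos : forall e, (0 < mprime et c tau e)%N.
  move=> e; apply/card_gt0P; exists e; rewrite inE lexx andbT.
  by rewrite lerBlDr lerDl mulr_ge0 // ltW.
have hCR : \sum_e (Ccount_e eu el et p tau e)%:R = C :> R.
  by rewrite -natr_sum hsC.
have hS : \sum_j Y j = m%:R / s%:R * C.
  rewrite /Y; under eq_bigr do rewrite big_mkcond.
  rewrite exchange_big /= -hCR mulr_sumr; apply: eq_bigr => e _.
  have mpR : (mprime et c tau e)%:R != 0 :> R by rewrite pnatr_eq0 -lt0n.
  transitivity ((m%:R : R) / (s%:R * (mprime et c tau e)%:R) * (Ccount_e eu el et p tau e)%:R
     * (mprime et c tau e)%:R); last by field; rewrite mpR s0.
  set a := ((m%:R : R) / (s%:R * (mprime et c tau e)%:R) * (Ccount_e eu el et p tau e)%:R).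
  rewrite /mprime cardsum natr_sum mulr_sumr; apply: eq_bigr => f _.
  rewrite andbC lerBlDr.
  by case: ifP => _; rewrite ?mulr1 ?mulr0.
have a_ge0 : forall e, 0 <= (m%:R : R) / (s%:R * (mprime et c tau e)%:R) * (Ccount_e eu el et p tau e)%:R.
  by move=> e; rewrite mulr_ge0 // divr_ge0 // mulr_ge0.
have hY : forall j, 0 <= Y j <= m%:R / s%:R * C.
  move=> j; apply/andP; split.
    by rewrite /Y; apply: sumr_ge0 => e _.
  apply: (@le_trans _ _ (\sum_e (m%:R : R) / (s%:R * (mprime et c tau e)%:R) * (Ccount_e eu el et p tau e)%:R)).
    rewrite /Y big_mkcond /=; apply: ler_sum => e _.
    by case: ifP => _ //; apply: a_ge0.
  rewrite -hCR mulr_sumr; apply: ler_sum => e _.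
  have mpR : (0 : R) < (mprime et c tau e)%:R by rewrite ltr0n.
  rewrite invfM mulrA (mulrAC _ _ (Ccount_e eu el et p tau e)%:R) ler_pdivrMr //.
  apply: ler_peMr; first by rewrite mulr_ge0 // divr_ge0.
  by rewrite ler1n.
split.
  rewrite hS; field; by rewrite m0 s0.
rewrite hS.
have hB := @var_bound R _ Y (m%:R / s%:R * C) HJ hY.
rewrite hS card_ord in hB.
apply: le_trans (ler_wpM2l _ hB) _.
  by rewrite divr_ge0.
rewrite le_eqVlt; apply/orP; left; apply/eqP.
field; by rewrite m0 s0.
Qed.
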